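(* For all $\alpha\in[-1,1]$, \[ \Lambda(\alpha)\le c-|\alpha|(c-D),\qquad D=\mathbb E|F(0)|. \]
   Context: Let $c>0$, $q>0$, $\kappa>-1$. $F=(F(x))_{x\in\mathbb Z}$ and $B=(B(i))_{i\in\mathbb Z}$ are mutually independent families of i.i.d. random variables, $\mathbb P(B(i)=\pm1)=1/2$, and $F(x)$ has a density $\varrho$ that is even, continuous, strictly positive on $(-c,c)$, zero outside $(-c,c)$, with $\lim_{x\to c}\varrho(x)/|c-x|^{\kappa}=q$. A lazy walk satisfies $|\gamma(i+1)-\gamma(i)|\le1$; the action of a lazy walk $\gamma$ on $\{0,\dots,n\}$ is $A(B,F;\gamma)=\sum_{i=1}^nB(i)F(\gamma(i))$; $\bar A(B,F;n,k)$ is the minimal action over lazy walks from $(0,0)$ to $(n,k)$. The shape function $\Lambda$ is the deterministic function with $\bar A(B,F;n,[\alpha n])/n\to-\Lambda(\alpha)$ almost surely, $[\cdot]$ rounding towards $0$. *)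

(* Defs.v *)
From HB Require Import structures.
From mathcomp Require Import all_boot all_order all_algebra.
From mathcomp Require Import all_classical all_reals all_analysis.
Set Implicit Arguments. Unset Strict Implicit. Unset Printing Implicit Defensive.
Import Order.TTheory GRing.Theory Num.Theory.
Import numFieldNormedType.Exports.
Local Open Scope classical_set_scope.
Local Open Scope ring_scope.

Definition mutually_independent {d} {T : measurableType d} {R : realType}
  (P : probability T R) {I : eqType} (X : I -> T -> R) : Prop :=
  forall (J : seq I) (A : I -> set R), uniq J ->
    (forall i, i \in J -> measurable (A i)) ->
    P (\bigcap_(i in [set i | i \in J]) (X i @^-1` A i)) =
    (\big[*%E/1%E]_(i <- J) P (X i @^-1` A i))%E.

Definition round0 {R : realType} (x : R) : int :=
  if 0 <= x then Num.floor x else Num.ceil x.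

Definition lazy_walk (n : nat) (k : int) (g : nat -> int) : Prop :=
  g 0%N = 0 /\ g n = k /\ (forall i, (i < n)%N -> `|g i.+1 - g i| <= 1).

Definition action {T} {R : realType} (B F : int -> T -> R) (w : T)
  (n : nat) (g : nat -> int) : R :=
  \sum_(1 <= i < n.+1) B i%:Z w * F (g i) w.

Definition min_action {T} {R : realType} (B F : int -> T -> R) (w : T)
  (n : nat) (k : int) : R :=
  inf [set action B F w n g | g in lazy_walk n k].

Definition joint_family {T} {R : realType} (F B : int -> T -> R)
  (s : int + int) : T -> R :=
  match s with inl x => F x | inr i => B i end.

(* Main.v *)
Require Import Defs.
From HB Require Import structures.
From mathcomp Require Import all_boot all_order all_algebra.
From mathcomp Require Import all_classical all_reals all_analysis.
From mathcomp Require Import ring lra zify.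
From mathcomp Require Import measurable_realfun.
Import Order.TTheory GRing.Theory Num.Theory.
Import numFieldNormedType.Exports.
Local Open Scope classical_set_scope.
Local Open Scope ring_scope.
Lemma eqle (R : numDomainType) (x y : R) : x = y -> x <= y. Proof. by move->. Qed.

Lemma walk_bound (R : realType) (c : R) (b : nat -> R) (f : int -> R) n (g : nat -> int) :
  (forall i, `|b i| <= 1) -> (forall x, `|f x| <= c) -> g 0%N = 0 ->
  (forall i, (i < n)%N -> `|g i.+1 - g i| <= 1) ->
  exists M : nat, [/\ (M <= n)%N, (forall i, (i <= n)%N -> g i <= M%:Z) &
    - (\sum_(x < M) `|f (x.+1)%:Z| + (n%:R - M%:R) * c)
      <= \sum_(1 <= i < n.+1) b i * f (g i)].
Proof.
move=> hb hf g0; elim: n => [|n IH] hstep.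
  exists 0%N; split => //.
    by move=> i; rewrite leqn0 => /eqP ->; rewrite g0.
  by rewrite big_ord0 big_geq // subrr mul0r addr0 oppr0.
have [M [Mn gM HS]] : exists M : nat, [/\ (M <= n)%N, (forall i, (i <= n)%N -> g i <= M%:Z) &
    - (\sum_(x < M) `|f (x.+1)%:Z| + (n%:R - M%:R) * c)
      <= \sum_(1 <= i < n.+1) b i * f (g i)].
  by apply: IH => i lin; apply: hstep; apply: ltnW.
have hbf x i : - `|f x| <= b i * f x.
  have := ler_norm (-(b i * f x)); rewrite normrN normrM => h.
  rewrite lerNl; apply: le_trans h _.
  by rewrite -[leRHS]mul1r ler_wpM2r.
have hst := hstep n (ltnSn n).
rewrite big_nat_recr //=.
have [le|gt] := lerP (g n.+1) M%:Z.
  exists M; split; first by apply: leqW.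
    move=> i; rewrite leq_eqVlt => /orP[/eqP -> //|]; rewrite ltnS; exact: gM.
  have ht : - c <= b n.+1 * f (g n.+1) by apply: le_trans (hbf _ _); rewrite lerN2.
  apply: le_trans (lerD HS ht).
  by apply: eqle; rewrite mulrSr; ring.
have gn1 : g n.+1 = (M.+1)%:Z.
  have h1 := gM n (leqnn n).
  have h2 : g n.+1 - g n <= 1 by apply: le_trans (ler_norm _) hst.
  move: gt h1 h2; rewrite -[M.+1]addn1 PoszD; lia.
exists M.+1; split; first by [].
  move=> i; rewrite leq_eqVlt => /orP[/eqP -> //|]; first by rewrite gn1.
  by rewrite ltnS => /gM /le_trans; apply; rewrite lez_nat.
apply: le_trans (lerD HS (hbf (g n.+1) n.+1)).
rewrite big_ord_recr /= gn1.
by apply: eqle; rewrite !mulrSr; ring.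
Qed.

Lemma sum_shrink (R : realType) (c : R) (f : int -> R) n j M :
  (forall x, `|f x| <= c) -> (j <= M)%N ->
  \sum_(x < M) `|f (x.+1)%:Z| + (n%:R - M%:R) * c <=
  \sum_(x < j) `|f (x.+1)%:Z| + (n%:R - j%:R) * c.
Proof.
move=> hf; elim: M => [|M IH]; first by rewrite leqn0 => /eqP ->.
rewrite leq_eqVlt => /orP[/eqP -> //|]; rewrite ltnS => /IH h.
apply: le_trans h; rewrite big_ord_recr /= mulrSr.
have := hf (M.+1)%:Z; lra.
Qed.

Lemma walk_pos (R : realType) (c : R) (b : nat -> R) (f : int -> R) n (k : int) (g : nat -> int) :
  (forall i, `|b i| <= 1) -> (forall x, `|f x| <= c) -> lazy_walk n k g -> 0 <= k ->
  - (\sum_(x < `|k|%N) `|f (x.+1)%:Z| + (n%:R - (`|k|%N)%:R) * c)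
      <= \sum_(1 <= i < n.+1) b i * f (g i).
Proof.
move=> hb hf [g0 [gn hs]] k0.
have [M [Mn gM HS]] := @walk_bound R c b f n g hb hf g0 hs.
apply: le_trans HS; rewrite lerN2; apply: sum_shrink => //.
have := gM n (leqnn n); rewrite gn.
by case: k k0 {gn} => // k _; rewrite lez_nat.
Qed.

Lemma walk_neg (R : realType) (c : R) (b : nat -> R) (f : int -> R) n (k : int) (g : nat -> int) :
  (forall i, `|b i| <= 1) -> (forall x, `|f x| <= c) -> lazy_walk n k g -> k <= 0 ->
  - (\sum_(x < `|k|%N) `|f (- (x.+1)%:Z)| + (n%:R - (`|k|%N)%:R) * c)
      <= \sum_(1 <= i < n.+1) b i * f (g i).
Proof.
move=> hb hf [g0 [gn hs]] k0.
have hf' : forall x, `|(fun y => f (- y)) x| <= c by move=> x; exact: hf.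
have hw : lazy_walk n (- k) (fun i => - g i).
  split; first by rewrite g0 oppr0.
  split; first by rewrite gn.
  by move=> i /hs; rewrite -opprD normrN.
have := @walk_pos R c b (fun y => f (- y)) n (- k) (fun i => - g i) hb hf' hw.
rewrite oppr_ge0 abszN => /(_ k0).
by move=> H; apply: le_trans H _; apply: eqle; apply: eq_bigr => i _; rewrite opprK.
Qed.

Definition sk (k : int) : int := if 0 <= k then 1 else -1.

Lemma min_bound (R : realType) (T : Type) (c : R) (B F : int -> T -> R) (w : T) n (k : int) :
  0 <= c -> (forall i, `|B i w| <= 1) -> (forall x, `|F x w| <= c) -> (`|k| <= n)%N ->
  - (\sum_(x < `|k|%N) `|F (sk k * (x.+1)%:Z) w| + (n%:R - (`|k|%N)%:R) * c)
      <= min_action B F w n k.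
Proof.
move=> c0 hB hF kn; rewrite /min_action.
set S := [set _ | _ in _].
have [->|ne] := eqVneq S set0.
  rewrite inf0 oppr_le0; apply: addr_ge0; first by apply: sumr_ge0 => *.
  by apply: mulr_ge0 => //; rewrite subr_ge0 ler_nat.
apply: lb_le_inf; first exact/set0P.
move=> _ [g hg <-]; rewrite /action.
rewrite /sk; case: ifPn => k0.
  under eq_bigr do rewrite mul1r.
  exact: (@walk_pos R c (fun i => B i%:Z w) (fun x => F x w) n k g).
under eq_bigr do rewrite mulN1r.
apply: (@walk_neg R c (fun i => B i%:Z w) (fun x => F x w) n k g) => //.
by rewrite ltW // ltNge.
Qed.

Lemma round0_bounds (R : realType) (x : R) :
  ((`|round0 x|%N)%:R : R) <= `|x| /\ `|x| - 1 < (`|round0 x|%N)%:R.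
Proof.
rewrite natr_absz /round0; case: ifPn => x0.
  have f0 : 0 <= Num.floor x by rewrite floor_ge0.
  rewrite !ger0_norm ?ler0z //; split; first exact: floor_le.
  by have := floorD1_gt x; rewrite intrD; lra.
have x0' : x < 0 by rewrite ltNge.
have c0 : Num.ceil x <= 0 by rewrite ceil_le0 ltW.
rewrite !ler0_norm ?ler0z ?(ltW x0') //.
have := ceil_ge x; have := ceilB1_lt x; rewrite intrB.
lra.
Qed.

Lemma mpre d (T : measurableType d) (R : realType) (f : T -> R) (U : set R) :
  measurable_fun setT f -> measurable U -> measurable (f @^-1` U).
Proof. by move=> mf mU; rewrite -[_ @^-1` _]setTI; exact: mf. Qed.

Lemma ae_B d (T : measurableType d) (R : realType) (P : probability T R) (X : T -> R) :
  measurable_fun setT X ->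
  P (X @^-1` [set 1]) = (2^-1)%:E -> P (X @^-1` [set -1]) = (2^-1)%:E ->
  {ae P, forall w, `|X w| <= 1}.
Proof.
move=> mX h1 h2.
have m1 : measurable (X @^-1` [set 1]) by apply: mpre.
have m2 : measurable (X @^-1` [set -1]) by apply: mpre.
exists (~` (X @^-1` [set 1] `|` X @^-1` [set -1])); split.
- by apply: measurableC; apply: measurableU.
- rewrite probability_setC; last exact: measurableU.
  rewrite measureU //; last first.
    by apply/seteqP; split => // w [/= -> ]; move/eqP; rewrite -subr_eq0 opprK; rewrite (_ : 1 + 1 = 2%:R :> R) // pnatr_eq0.
  have -> : P (X @^-1` [set 1]) + P (X @^-1` [set -1]) = 1%E.
    by rewrite h1 h2 -EFinD (_ : 2^-1 + 2^-1 = 1 :> R) //; field.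
  by rewrite subee.
- move=> w /= hw [] /= h; apply: hw; rewrite h ?normr1 ?normrN1 //.
Qed.

Lemma ae_F d (T : measurableType d) (R : realType) (P : probability T R) (X : T -> R)
  (c : R) (rho : R -> R) :
  measurable_fun setT X ->
  (forall x, ~ (- c < x < c) -> rho x = 0) ->
  (forall (A : set R), measurable A ->
     P (X @^-1` A) = (\int[lebesgue_measure]_(y in A) (rho y)%:E)%E) ->
  {ae P, forall w, `|X w| <= c}.
Proof.
move=> mX hr hd.
have mA : measurable (~` [set` `]-c, c[]) by apply: measurableC; exact: measurable_itv.
exists (X @^-1` (~` [set` `]-c, c[])); split.
- exact: mpre.
- rewrite hd //.
  rewrite (eq_integral (fun _ => 0%E)) ?integral0 // => y.
  rewrite inE /= in_itv /= => hy.
  by rewrite hr.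
- move=> w /= hw hin; apply: hw.
  move: hin => /=; rewrite in_itv /= => /andP[h1 h2].
  by rewrite ler_norml; apply/andP; split; apply: ltW.
Qed.

Lemma same_law_abs d (T : measurableType d) (R : realType) (P : probability T R) (X Y : T -> R) :
  measurable_fun setT X -> measurable_fun setT Y ->
  (forall A : set R, measurable A -> P (X @^-1` A) = P (Y @^-1` A)) ->
  (\int[P]_w (`|X w|)%:E = \int[P]_w (`|Y w|)%:E)%E.
Proof.
move=> mX mY hXY.
have mabs : measurable_fun setT (fun t : R => @EFin R `|t|).
  by apply/measurable_EFinP; exact: normr_measurable.
transitivity (\int[pushforward P X]_(t in setT) (`|t|)%:E)%E.
  by rewrite (ge0_integral_pushforward mX P measurableT mabs) // preimage_setT.
transitivity (\int[pushforward P Y]_(t in setT) (`|t|)%:E)%E; last first.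
  by rewrite (ge0_integral_pushforward mY P measurableT mabs) // preimage_setT.
by apply: eq_measure_integral => A mA _ /=; rewrite /pushforward hXY.
Qed.

Lemma conv_r (R : realType) (alpha : R) :
  (fun n : nat => ((`|round0 (alpha * n%:R)|%N)%:R : R) / n%:R) @ \oo --> `|alpha|.
Proof.
apply: (@squeeze_cvgr _ _ _ _ (fun n => `|alpha| - 2 * n.+1%:R^-1) (fun n => `|alpha|)).
- near=> n.
  have n1 : (1 <= n)%N by near: n; exact: nbhs_infty_ge.
  have n0 : (0 : R) < n%:R by rewrite ltr0n.
  have [h1 h2] := @round0_bounds R (alpha * n%:R).
  rewrite normrM (ger0_norm (ltW n0)) in h1 h2.
  apply/andP; split.
    rewrite ler_pdivlMr //.
    have hn : (n.+1%:R : R) <= 2 * n%:R by rewrite -natrM ler_nat; lia.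
    have hp : (0 : R) < n.+1%:R^-1 by rewrite invr_gt0 ltr0n.
    have he : (n.+1%:R : R)^-1 * n.+1%:R = 1 by rewrite mulVf // pnatr_eq0.
    have hm : 1 <= n.+1%:R^-1 * (2 * n%:R) :> R.
      by rewrite -[leLHS]he ler_pM2l.
    move: hm h2; set h := (n.+1%:R)^-1; set A := `|alpha|; set N := n%:R.
    set K := (`|round0 (alpha * N)|%:R : R); nra.
  by rewrite ler_pdivrMr.
- rewrite -[X in _ --> X]subr0; apply: cvgB; first exact: cvg_cst.
  rewrite -(mulr0 2); apply: cvgMr; exact: cvg_harmonic.
- exact: cvg_cst.
Unshelve. all: by end_near.
Qed.

Lemma le_limn_einf (R : realType) (u v : (\bar R)^nat) :
  (forall n, (u n <= v n)%E) -> (limn_einf u <= limn_einf v)%E.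
Proof.
move=> h; rewrite !limn_einf_lim; apply: lee_lim; [exact: is_cvg_einfs|exact: is_cvg_einfs|].
apply: nearW => n /=; apply: le_ereal_inf_tmp => _ [j hj <-].
apply: le_trans (h j); apply: ereal_inf_lbound; by exists j.
Qed.

Lemma limn_einf_cvg (R : realType) (u : R^nat) (l : R) :
  u @ \oo --> l -> limn_einf (fun n => (u n)%:E) = l%:E.
Proof.
move=> hu.
have hc : (fun n => (u n)%:E) @ \oo --> l%:E.
  by apply: cvg_EFin; [exact: nearW|exact: hu].
by rewrite is_cvg_limn_einfE; [exact: cvg_lim|apply/cvg_ex; exists l%:E].
Qed.

Lemma Z_bound (R : realType) (T : Type) (c : R) (B F : int -> T -> R) (w : T) n (k : int) :
  0 <= c -> (forall i, `|B i w| <= 1) -> (forall x, `|F x w| <= c) -> (`|k| <= n)%N ->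
  - (min_action B F w n k / n%:R) <=
  c - (`|k|%N)%:R / n%:R * c + n%:R^-1 * \sum_(x < `|k|%N) `|F (sk k * (x.+1)%:Z) w|.
Proof.
move=> c0 hB hF kn.
have := @min_bound R T c B F w n k c0 hB hF kn.
move=> h.
case: n kn h => [|n] kn h.
  by rewrite invr0 !mulr0 !mul0r oppr0 !addr0.
have np : (0 : R) < n.+1%:R by rewrite ltr0n.
set S := \sum_(x < _) _ in h *.
set mn := min_action _ _ _ _ _ in h *.
have -> : c - (`|k|%N)%:R / n.+1%:R * c + n.+1%:R^-1 * S =
  (S + (n.+1%:R - (`|k|%N)%:R) * c) / n.+1%:R.
  by field; rewrite addrC natr1 pnatr_eq0.
rewrite ler_pdivlMr // mulNr divfK ?pnatr_eq0 //; lra.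
Qed.

Theorem lemma3p6 (R : realType) (c q kappa : R) (rho : R -> R)
  (d : measure_display) (T : measurableType d) (P : probability T R)
  (F B : int -> T -> R) (Lambda : R -> R) :
  0 < c -> 0 < q -> -1 < kappa ->
  (* the density rho *)
  (forall x, rho (- x) = rho x) ->
  {within [set x | - c < x < c], continuous rho} ->
  (forall x, - c < x < c -> 0 < rho x) ->
  (forall x, ~ (- c < x < c) -> rho x = 0) ->
  (fun x => rho x / (`|c - x| `^ kappa)) @ at_left c --> q ->
  (* F and B are random variables, mutually independent *)
  (forall x, measurable_fun setT (F x)) ->
  (forall i, measurable_fun setT (B i)) ->
  mutually_independent P (joint_family F B) ->
  (* F(x) has density rho *)
  (forall x (A : set R), measurable A ->
     P (F x @^-1` A) = (\int[lebesgue_measure]_(y in A) (rho y)%:E)%E) ->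
  (* B(i) = +1 or -1 with probability 1/2 *)
  (forall i, P (B i @^-1` [set 1]) = (2^-1)%:E /\
             P (B i @^-1` [set -1]) = (2^-1)%:E) ->
  (* Lambda is the shape function *)
  (forall alpha, -1 <= alpha <= 1 ->
     {ae P, forall w,
        (fun n : nat => min_action B F w n (round0 (alpha * n%:R)) / n%:R)
          @ \oo --> - Lambda alpha}) ->
  forall alpha, -1 <= alpha <= 1 ->
    ((Lambda alpha)%:E <=
     (c - `|alpha| * c)%:E + `|alpha|%:E * \int[P]_w (`|F 0 w|)%:E)%E.
Proof.
move=> c0 _ _ _ _ _ rzero _ mF mB _ hdens hBd hLam alpha ha.
have c0' : 0 <= c := ltW c0.
have a1 : `|alpha| <= 1 by rewrite ler_norml.
have aeF : {ae P, forall w, forall x, `|F x w| <= c}.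
  have h n : {ae P, forall w, `|F (Posz n) w| <= c /\ `|F (Negz n) w| <= c}.
    apply: filterS2 (@ae_F _ _ _ P (F (Posz n)) c rho (mF _) rzero (hdens _)) (@ae_F _ _ _ P (F (Negz n)) c rho (mF _) rzero (hdens _)).
    by move=> w h1 h2; split.
  apply: filterS (ae_foralln h) => w H x; case: x => n; [exact: (H n).1|exact: (H n).2].
have aeB : {ae P, forall w, forall i, `|B i w| <= 1}.
  have h n : {ae P, forall w, `|B (Posz n) w| <= 1 /\ `|B (Negz n) w| <= 1}.
    apply: filterS2 (@ae_B _ _ _ P (B (Posz n)) (mB _) (hBd _).1 (hBd _).2) (@ae_B _ _ _ P (B (Negz n)) (mB _) (hBd _).1 (hBd _).2).
    by move=> w h1 h2; split.
  apply: filterS (ae_foralln h) => w H x; case: x => n; [exact: (H n).1|exact: (H n).2].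
set DE := (\int[P]_w (`|F 0 w|)%:E)%E.
have DEy y : (\int[P]_w (`|F y w|)%:E)%E = DE.
  by apply: (@same_law_abs _ _ _ P) => // A mA; rewrite !hdens.
have DE0 : (0 <= DE)%E by apply: integral_ge0 => w _; rewrite lee_fin.
have DEc : (DE <= c%:E)%E.
  have := @ae_ge0_le_integral _ _ _ P setT measurableT (fun w => (`|F 0 w|)%:E) (cst c%:E).
  rewrite integral_cst // [X in (_ * X)%E]probability_setT mule1; apply.
  - by move=> w _; rewrite lee_fin.
  - by apply/measurable_EFinP; apply: measurableT_comp; [exact: normr_measurable|exact: mF].
  - by move=> w _; rewrite lee_fin.
  - exact: measurable_cst.
  - by apply: filterS aeF => w H _; rewrite lee_fin.
have DEfin : DE \is a fin_num by rewrite ge0_fin_numE // (le_lt_trans DEc) ?ltey.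
set D := fine DE.
have DED : DE = D%:E by rewrite /D fineK.
pose k := fun n : nat => round0 (alpha * n%:R).
have hkn n : (`|k n| <= n)%N.
  have [h1 _] := @round0_bounds R (alpha * n%:R).
  rewrite -(ler_nat R); apply: le_trans h1 _.
  by rewrite normrM (ger0_norm (ler0n _ _)) -[leRHS]mul1r ler_wpM2r.
pose r := fun n : nat => ((`|k n|%N)%:R : R) / n%:R.
have r1 n : r n <= 1.
  rewrite /r; case: n {hkn} (hkn n) => [|n] hn; first by rewrite invr0 mulr0.
  by rewrite ler_pdivrMr ?ltr0n // mul1r ler_nat.
have r0 n : 0 <= r n by rewrite /r divr_ge0.
pose Z := fun (n : nat) (w : T) =>
  ((c - r n * c + n%:R^-1 * \sum_(x < `|k n|%N) `|F (sk (k n) * (x.+1)%:Z) w|)%:E : \bar R).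
have Z0 n w : (0 <= Z n w)%E.
  rewrite lee_fin; apply: addr_ge0.
    by have := r1 n; have := r0 n; nra.
  by apply: mulr_ge0; [rewrite invr_ge0 ler0n|apply: sumr_ge0].
have mZ n : measurable_fun setT (Z n).
  apply/measurable_EFinP; apply: measurable_funD; first exact: measurable_cst.
  apply: measurable_funM; first exact: measurable_cst.
  apply: measurable_sum => x; apply: measurableT_comp; [exact: normr_measurable|exact: mF].
have hpt : {ae P, forall w, ((Lambda alpha)%:E <= limn_einf (Z^~ w))%E}.
  apply: filterS3 aeF aeB (hLam alpha ha) => w hF hB hcv.
  have hle n : ((- (min_action B F w n (k n) / n%:R))%:E <= Z n w)%E.
    rewrite lee_fin; exact: (@Z_bound R T c B F w n (k n) c0' hB hF (hkn n)).
  apply: (le_trans _ (@le_limn_einf R _ _ hle)).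
  rewrite (@limn_einf_cvg R (fun n => - (min_action B F w n (k n) / n%:R)) (Lambda alpha)) //.
  by rewrite -[Lambda alpha]opprK; apply: cvgN; exact: hcv.
have mFa x : measurable_fun setT (fun w => (`|F x w|)%:E : \bar R).
  by apply/measurable_EFinP; apply: measurableT_comp; [exact: normr_measurable|exact: mF].
have hint n : (\int[P]_w Z n w = (c - r n * c + r n * D)%:E)%E.
  rewrite /Z.
  under eq_integral do rewrite EFinD EFinM -sumEFin.
  set S := fun w => (\sum_(x < `|k n|%N) (`|F (sk (k n) * (x.+1)%:Z) w|)%:E)%E.
  have mS : measurable_fun setT S by apply: emeasurable_sum => x; exact: mFa.
  have S0 w : (0 <= S w)%E by apply: sume_ge0 => *; rewrite lee_fin.
  have i0 : (0 <= (n%:R^-1 : R)%:E)%E by rewrite lee_fin invr_ge0 ler0n.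
  rewrite (@ge0_integralD _ _ _ P setT measurableT (fun _ => (c - r n * c)%:E)
     (fun w => (n%:R^-1)%:E * S w)%E); first last.
  - exact: measurable_funeM.
  - by move=> w _; apply: mule_ge0.
  - exact: measurable_cst.
  - by move=> w _; rewrite lee_fin; have := r1 n; have := r0 n; nra.
  rewrite integral_cst // [X in (_ * X)%E]probability_setT mule1.
  rewrite ge0_integralZl //.
  rewrite /S ge0_integral_sum //.
  under eq_bigr do rewrite DEy.
  rewrite DED sumEFin -EFinM -EFinD; congr EFin.
  rewrite sumr_const card_ord /r -mulr_natl; ring.
rewrite DED.
have [Lneg|Lpos] := ltP (Lambda alpha) 0.
  apply: (@le_trans _ _ 0%E); first by rewrite lee_fin ltW.
  apply: adde_ge0; first by rewrite lee_fin; have := normr_ge0 alpha; nra.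
  by apply: mule_ge0; [rewrite lee_fin|rewrite -DED].
have e1 : (Lambda alpha)%:E = (\int[P]_w (cst (Lambda alpha)%:E) w)%E.
  by rewrite integral_cst // [X in (_ * X)%E]probability_setT mule1.
have mL : measurable_fun setT (fun w => limn_einf (Z^~ w)).
  rewrite /limn_einf; apply: measurableT_comp; first exact: oppe_measurable.
  apply: (@measurable_fun_limn_esup _ _ _ _ (fun n w => - Z n w)%E) => n.
  by apply: measurableT_comp; [exact: oppe_measurable|exact: mZ].
have L0 w : (0 <= limn_einf (Z^~ w))%E.
  have := @le_limn_einf R (fun=> 0%:E) (Z^~ w) (fun n => Z0 n w).
  by rewrite (@limn_einf_cvg R (fun=> 0) 0 (cvg_cst 0)).
rewrite e1.
apply: (@le_trans _ _ (\int[P]_w limn_einf (Z^~ w))%E).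
  apply: (@ae_ge0_le_integral _ _ _ P setT measurableT (cst (Lambda alpha)%:E)
     (fun w => limn_einf (Z^~ w))).
  - by move=> w _; rewrite lee_fin.
  - exact: measurable_cst.
  - by move=> w _; exact: L0.
  - exact: mL.
  - by apply: filterS hpt => w h _.
apply: le_trans (fatou P measurableT mZ (fun n x _ => Z0 n x)) _.
rewrite (_ : (fun n => \int[P]_(x in setT) Z n x)%E = (fun n => (c - r n * c + r n * D)%:E)); last first.
  by apply: funext => n; exact: hint.
rewrite (@limn_einf_cvg R _ (c - `|alpha| * c + `|alpha| * D)).
  by rewrite -EFinM -EFinD.
apply: cvgD; last exact: cvgMl (@conv_r R alpha).
apply: cvgB; first exact: cvg_cst.
exact: cvgMl (@conv_r R alpha).
Qed.
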